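(* Let $\mathcal X\subseteq\mathbb R^p$, let $\mathcal A=\{a^{(1)},\dots,a^{(d)}\}$ (historical action set) and $\bar{\mathcal A}=\{\bar a^{(1)},\dots,\bar a^{(m)}\}$ (new action set) be finite sets of real actions. Let $(\boldsymbol X_i,A_i,R_i)$, $i=1,\dots,n$, be random tuples with $\boldsymbol X_i\in\mathcal X$, $A_i\in\mathcal A$, $R_i\in\mathbb R$ such that: (i) the tuples are independent; (ii) $\boldsymbol X_1,\dots,\boldsymbol X_n$ are i.i.d., distributed as a generic $\boldsymbol X$; (iii) conditionally on $\boldsymbol X_i$, $A_i$ has distribution $\widetilde\pi_i(\cdot\mid\boldsymbol X_i)$ with $\widetilde\pi_i(a\mid\boldsymbol x)>0$ for all $a\in\mathcal A$, $\boldsymbol x\in\mathcal X$; (iv) the conditional distribution of the reward given features $\boldsymbol x$ and action $a$ does not depend on $i$. For $\boldsymbol x\in\mathcal X$ and $a\in\mathcal A\cup\bar{\mathcal A}$ let $\varrho(\boldsymbol x,a)$ denote the expected reward when action $a$ is taken for a policyholder with features $\boldsymbol x$ (so $\varrho(\boldsymbol x,a)=\mathbb E[R_i\mid\boldsymbol X_i=\boldsymbol x,A_i=a]$ for $a\in\mathcal A$). Let $f_1,\dots,f_q:\mathbb R\to\mathbb R$ and $\boldsymbol f(a)=(1,f_1(a),\dots,f_q(a))^\top$. Let $D\in\mathbb R^{d\times(q+1)}$ have $k$-th row $\boldsymbol f(a^{(k)})^\top$ and $\bar D\in\mathbb R^{m\times(q+1)}$ have $k$-th row $\boldsymbol f(\bar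 a^{(k)})^\top$, and assume $D$ has full column rank $q+1$. Assume the regression assumption: for every $\boldsymbol x\in\mathcal X$ there is $\boldsymbol\beta(\boldsymbol x)\in\mathbb R^{q+1}$ with $\varrho(\boldsymbol x,a)=\boldsymbol f(a)^\top\boldsymbol\beta(\boldsymbol x)$ for all $a\in\mathcal A\cup\bar{\mathcal A}$. For each $i$ let $W_i(\boldsymbol x)\in\mathbb R^{d\times d}$ be symmetric positive definite for every $\boldsymbol x$, and set $\mathbf K_i(\boldsymbol x)=W_i(\boldsymbol x)D\,(D^\top W_i(\boldsymbol x)D)^{-1}\bar D^\top\in\mathbb R^{d\times m}$. For a deterministic policy $\bar\pi:\mathcal X\to\bar{\mathcal A}$ define the kernelized IPS estimator $$\widehat V_{\rm K}(\bar\pi)=\frac1n\sum_{i=1}^n R_i\,\frac{\langle\boldsymbol e_{A_i},\mathbf K_i(\boldsymbol X_i)\,\bar{\boldsymbol e}_{\bar\pi(\boldsymbol X_i)}\rangle}{\widetilde\pi_i(A_i\mid\boldsymbol X_i)}.$$ Then $\widehat V_{\rm K}(\bar\pi)$ is unbiased for $V(\bar\pi)=\mathbb E[\varrho(\boldsymbol X,\bar\pi(\boldsymbol X))]$.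
   Context: $\boldsymbol e_a\in\{0,1\}^d$ denotes the one-hot encoding of $a\in\mathcal A$ (entry $k$ equals $\mathbf 1_{\{a=a^{(k)}\}}$), and $\bar{\boldsymbol e}_{\bar a}\in\{0,1\}^m$ the one-hot encoding of $\bar a\in\bar{\mathcal A}$. $V(\bar\pi)$ is the value of $\bar\pi$, i.e. the expected reward when actions are chosen by $\bar\pi$. All expectations appearing are assumed finite. *)

(* Defs.v *)
From HB Require Import structures.
From mathcomp Require Import all_boot all_order all_algebra.
From mathcomp Require Import all_classical all_reals all_analysis.
Set Implicit Arguments. Unset Strict Implicit. Unset Printing Implicit Defensive.
Import Order.TTheory GRing.Theory Num.Theory.
Local Open Scope classical_set_scope.
Local Open Scope ring_scope.

(* f(a) = (1, f_1(a), ..., f_q(a)) as a row vector of size q+1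
   (f : 'I_q -> R -> R lists f_1, ..., f_q). *)
Definition fvec (R : pzRingType) (q : nat) (f : 'I_q -> R -> R) (x : R)
  : 'rV[R]_(q.+1) :=
  \row_(j < q.+1) match unlift ord0 j with None => 1 | Some j' => f j' x end.

Definition design (R : pzRingType) (q r : nat) (f : 'I_q -> R -> R)
  (act : 'I_r -> R) : 'M[R]_(r, q.+1) :=
  \matrix_(k < r, j < q.+1) fvec f (act k) 0 j.

Definition onehot (R : pzRingType) (r : nat) (k : 'I_r) : 'rV[R]_r :=
  \row_(l < r) (l == k)%:R.
Arguments onehot {R r} k.

Definition sym_posdef (R : numDomainType) (r : nat) (M : 'M[R]_r) : Prop :=
  M^T = M /\ forall v : 'rV[R]_r, v != 0 -> 0 < (v *m M *m v^T) 0 0.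

Definition Kmat (R : fieldType) (q d m : nat) (D : 'M[R]_(d, q.+1))
  (Dbar : 'M[R]_(m, q.+1)) (W : 'M[R]_d) : 'M[R]_(d, m) :=
  W *m D *m invmx (D^T *m W *m D) *m Dbar^T.

Definition tuple_events (R : realType) (dO : measure_display)
  (Omega : measurableType dO) (p d : nat)
  (X : Omega -> p.-tuple R) (A : Omega -> 'I_d) (Rw : Omega -> R)
  : set (set Omega) :=
  [set E | exists (B : set (p.-tuple R)) (S : set 'I_d) (C : set R),
      [/\ measurable B, measurable C &
          E = X @^-1` B `&` A @^-1` S `&` Rw @^-1` C]].

Definition tuples_independent (R : realType) (dO : measure_display)
  (Omega : measurableType dO) (P : probability Omega R) (n p d : nat)
  (X : 'I_n -> Omega -> p.-tuple R) (A : 'I_n -> Omega -> 'I_d)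
  (Rw : 'I_n -> Omega -> R) : Prop :=
  forall (J : {set 'I_n}) (F : 'I_n -> set Omega),
    (forall i, i \in J -> <<s tuple_events (X i) (A i) (Rw i) >> (F i)) ->
    P (\big[setI/setT]_(i in J) F i) = (\prod_(i in J) P (F i))%E.

(* Main.v *)
Require Import Defs.
Set Implicit Arguments. Unset Strict Implicit.
From HB Require Import structures.
From mathcomp Require Import all_boot all_order all_algebra.
From mathcomp Require Import all_classical all_reals all_analysis.
From mathcomp Require Import measurable_realfun ring lra.
Import Order.TTheory GRing.Theory Num.Theory.
Import HBNNSimple.
Local Open Scope classical_set_scope.
Local Open Scope ring_scope.

Section NT.
Context (R : realType) (dO dT : measure_display) (Omega : measurableType dO)
  (T : measurableType dT) (mu : {measure set Omega -> \bar R}) (X : Omega -> T)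
  (mX : measurable_fun setT X).
Variables (F G : Omega -> R) (mF : measurable_fun setT F) (mG : measurable_fun setT G)
  (F0 : forall w, 0 <= F w) (G0 : forall w, 0 <= G w).
Hypothesis hFG : forall B, measurable B ->
  (\int[mu]_w (F w * \1_B (X w))%:E = \int[mu]_w (G w * \1_B (X w))%:E)%E.

Let step_sfun (H : Omega -> R) (mH : measurable_fun setT H) (H0 : forall w, 0 <= H w)
  (s : {nnsfun T >-> R}) :
  (\int[mu]_w (H w * s (X w))%:E = \sum_(r \in range s)
     \int[mu]_w (H w * (r * \1_(s @^-1` [set r]) (X w)))%:E)%E.
Proof.
under eq_integral do rewrite fimfunE mulr_fsumr -fsumEFin//.
rewrite ge0_integral_fsum//.
- move=> r; apply/measurable_EFinP; apply: measurable_funM => //.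
  apply: measurable_funM; first exact: measurable_cst.
  apply: measurableT_comp => //; exact: measurable_indic.
- move=> r w _; rewrite lee_fin mulr_ge0//.
  by rewrite -lee_fin EFinM nnfun_muleindic_ge0.
Qed.

Lemma NT_sfun (s : {nnsfun T >-> R}) :
  (\int[mu]_w (F w * s (X w))%:E = \int[mu]_w (G w * s (X w))%:E)%E.
Proof.
rewrite !step_sfun//; apply: eq_fsbigr => r /set_mem [t _ <-].
have r0 : 0 <= s t by [].
under eq_integral do rewrite mulrCA EFinM.
under [RHS]eq_integral do rewrite mulrCA EFinM.
rewrite ge0_integralZl_EFin//; last 2 first.
- by move=> w _; rewrite lee_fin mulr_ge0.
- apply/measurable_EFinP; apply: measurable_funM => //.
  apply: measurableT_comp => //; exact: measurable_indic.
rewrite ge0_integralZl_EFin//; last 2 first.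
- by move=> w _; rewrite lee_fin mulr_ge0.
- apply/measurable_EFinP; apply: measurable_funM => //.
  apply: measurableT_comp => //; exact: measurable_indic.
by rewrite hFG.
Qed.

Lemma NT (h : T -> R) : measurable_fun setT h -> (forall x, 0 <= h x) ->
  (\int[mu]_w (F w * h (X w))%:E = \int[mu]_w (G w * h (X w))%:E)%E.
Proof.
move=> mh h0.
have mh' : measurable_fun setT (EFin \o h) by exact/measurable_EFinP.
pose s := nnsfun_approx measurableT mh'.
have key (H : Omega -> R) : measurable_fun setT H -> (forall w, 0 <= H w) ->
    (\int[mu]_w (H w * h (X w))%:E =
     limn (fun n => \int[mu]_w (H w * s n (X w))%:E))%E.
  move=> mH H0; rewrite -monotone_convergence//.
  - apply: eq_integral => w _; apply/esym/cvg_lim => //.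
    under eq_fun do rewrite EFinM.
    rewrite EFinM; apply: cvgeM.
    + exact: mule_def_fin.
    + exact: cvg_cst.
    + by apply: (cvg_nnsfun_approx measurableT mh') => // x _; rewrite lee_fin.
  - move=> n; apply/measurable_EFinP; apply: measurable_funM => //.
    exact: measurableT_comp.
  - by move=> n w _; rewrite lee_fin mulr_ge0.
  - move=> w _ a b ab; rewrite lee_fin ler_wpM2l//.
    exact/lefP/nd_nnsfun_approx.
rewrite (key F)// (key G)//.
by congr (limn _); apply/funext => n; exact: NT_sfun.
Qed.

End NT.

Section CE.
Context (R : realType) (dO dT : measure_display) (Omega : measurableType dO)
  (T : measurableType dT) (mu : {measure set Omega -> \bar R}) (X : Omega -> T)
  (mX : measurable_fun setT X).
Variables (F : Omega -> R) (psi : T -> R) (mF : measurable_fun setT F)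
  (mpsi : measurable_fun setT psi) (iF : mu.-integrable setT (EFin \o F)).
Hypothesis hpsi : forall B, measurable B ->
  (\int[mu]_w (F w * \1_B (X w))%:E = \int[mu]_w (psi (X w) * \1_B (X w))%:E)%E.

Let mG : measurable_fun setT (fun w => psi (X w)).
Proof. exact: measurableT_comp. Qed.

Let mind B : measurable B -> measurable_fun setT (fun w => \1_B (X w) : R).
Proof. move=> mB; apply: measurableT_comp => //; exact: measurable_indic. Qed.

Let iFB B : measurable B -> mu.-integrable setT (fun w => (F w * \1_B (X w))%:E).
Proof.
move=> mB; apply: le_integrable iF => //.
  by apply/measurable_EFinP; apply: measurable_funM => //; exact: mind.
move=> w _ /=; rewrite lee_fin normrM.
rewrite ler_piMr// /indic; case: (_ \in _) => /=; by rewrite ?normr1 ?normr0.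
Qed.

Let Bp := [set x | 0 <= psi x].
Let Bm := [set x | psi x < 0].
Let mBp : measurable Bp.
Proof.
have -> : Bp = psi @^-1` `[0, +oo[%classic.
  by apply/seteqP; split => x /=; rewrite in_itv /= andbT.
by rewrite -(setTI (psi @^-1` _)); apply: mpsi => //; exact: measurable_itv.
Qed.
Let mBm : measurable Bm.
Proof.
have -> : Bm = psi @^-1` `]-oo, 0[%classic.
  by apply/seteqP; split => x /=; rewrite in_itv /=.
by rewrite -(setTI (psi @^-1` _)); apply: mpsi => //; exact: measurable_itv.
Qed.

Let Gp_ge0 x : 0 <= psi x * \1_Bp x.
Proof.
rewrite /indic; have [h|h] := boolP (x \in Bp); rewrite ?mulr1 ?mulr0 //.
by move/set_mem: h.
Qed.
Let Gm_le0 x : psi x * \1_Bm x <= 0.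
Proof.
rewrite /indic; have [h|h] := boolP (x \in Bm); rewrite ?mulr1 ?mulr0 //.
by move/set_mem: h; rewrite /Bm /= => /ltW.
Qed.

Lemma CE_int : mu.-integrable setT (fun w => (psi (X w))%:E).
Proof.
apply/integrableP; split; first exact/measurable_EFinP.
have eq1 : forall w, `|(psi (X w))%:E|%E =
    ((psi (X w) * \1_Bp (X w))%:E + (- (psi (X w) * \1_Bm (X w)))%:E)%E.
  move=> w; rewrite abse_EFin /indic.
  have [h|h] := leP 0 (psi (X w)).
    have -> : (X w \in Bp) = true by apply/mem_set.
    have -> : (X w \in Bm) = false.
      by apply/negbTE/negP => /set_mem; rewrite /Bm /= ltNge h.
    by rewrite ger0_norm// mulr1 mulr0 oppr0 adde0.
  have -> : (X w \in Bp) = false.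
    by apply/negbTE/negP => /set_mem; rewrite /Bp /= leNgt h.
  have -> : (X w \in Bm) = true by apply/mem_set.
  by rewrite ltr0_norm// mulr1 mulr0 add0e.
under eq_integral do rewrite eq1.
rewrite ge0_integralD//; last 4 first.
- by move=> w _; rewrite lee_fin.
- by apply/measurable_EFinP; apply: measurable_funM => //; exact: mind.
- by move=> w _; rewrite lee_fin oppr_ge0.
- by apply/measurable_EFinP; apply: measurable_funN; apply: measurable_funM => //; exact: mind.
apply: lte_add_pinfty.
  by rewrite -hpsi//; exact: integrable_lty (iFB mBp).
have h2 := @integral_ge0N _ _ _ mu setT (fun w => (- (psi (X w) * \1_Bm (X w)))%:E).
rewrite -[X in (X < _)%E]oppeK -h2; last by move=> w _; rewrite lee_fin oppr_ge0.
under eq_integral do rewrite -EFinN opprK.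
rewrite -hpsi//.
have := integrable_fin_num measurableT (iFB mBm).
by move=> hf; rewrite ltey_eq fin_numN hf.
Qed.


Let pp (x : R) := (x + `|x|) / 2.
Let nn (x : R) := (`|x| - x) / 2.
Let nrm (x : R) : x <= `|x| /\ - x <= `|x|.
Proof. by split; [exact: ler_norm|rewrite -normrN; exact: ler_norm]. Qed.
Let pp0 (x : R) : 0 <= pp x.
Proof. by have [h1 h2] := nrm x; rewrite /pp; lra. Qed.
Let nn0 (x : R) : 0 <= nn x.
Proof. by have [h1 h2] := nrm x; rewrite /nn; lra. Qed.
Let mpp (f : Omega -> R) : measurable_fun setT f -> measurable_fun setT (fun w => pp (f w)).
Proof.
move=> mf; apply: measurable_funM; last exact: measurable_cst.
by apply: measurable_funD => //; apply: measurableT_comp => //; exact: normr_measurable.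
Qed.
Let mnn (f : Omega -> R) : measurable_fun setT f -> measurable_fun setT (fun w => nn (f w)).
Proof.
move=> mf; apply: measurable_funM; last exact: measurable_cst.
by apply: measurable_funB => //; apply: measurableT_comp => //; exact: normr_measurable.
Qed.
Let Fp w := pp (F w).
Let Fm w := nn (F w).
Let Gp w := pp (psi (X w)).
Let Gm w := nn (psi (X w)).
Let a w := Fp w + Gm w.
Let b w := Gp w + Fm w.
Let ma : measurable_fun setT a.
Proof. by apply: measurable_funD; [exact: mpp|exact: mnn]. Qed.
Let mb : measurable_fun setT b.
Proof. by apply: measurable_funD; [exact: mpp|exact: mnn]. Qed.
Let a0 w : 0 <= a w. Proof. by apply: addr_ge0; [exact: pp0|exact: nn0]. Qed.
Let b0 w : 0 <= b w. Proof. by apply: addr_ge0; [exact: pp0|exact: nn0]. Qed.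
Let ab w : a w - b w = F w - psi (X w).
Proof. rewrite /a /b /Fp /Fm /Gp /Gm /pp /nn; lra. Qed.
Let abs_ab w : `|a w| + `|b w| = `|F w| + `|psi (X w)|.
Proof. rewrite (ger0_norm (a0 w)) (ger0_norm (b0 w)) /a /b /Fp /Fm /Gp /Gm /pp /nn; lra. Qed.

Let iG := CE_int.

Lemma int_bound2 (f g1 g2 : Omega -> R) : measurable_fun setT f ->
  mu.-integrable setT (EFin \o g1) -> mu.-integrable setT (EFin \o g2) ->
  (forall w, `|f w| <= `|g1 w| + `|g2 w|) -> mu.-integrable setT (EFin \o f).
Proof.
move=> mf i1 i2 fg.
have i12 : mu.-integrable setT (EFin \o (fun w => `|g1 w| + `|g2 w|)).
  apply: (eq_integrable measurableT _ _ _ (integrableD measurableT (integrable_abse i1) (integrable_abse i2))).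
  by move=> w _ /=; rewrite EFinD.
apply: le_integrable i12 => //; first exact/measurable_EFinP.
move=> w _ /=; rewrite lee_fin (le_trans (fg w))//.
by rewrite [X in _ <= X]ger0_norm// addr_ge0.
Qed.

Let fin_sub0 (x y : \bar R) : x \is a fin_num -> y \is a fin_num ->
  (x - y)%E = 0 -> x = y.
Proof.
move=> /fineK <- /fineK <-; rewrite -EFinB => /eqP; rewrite eqe subr_eq0.
by move=> /eqP ->.
Qed.

Let hab B : measurable B ->
  (\int[mu]_w (a w * \1_B (X w))%:E = \int[mu]_w (b w * \1_B (X w))%:E)%E.
Proof.
move=> mB.
have i1 (g : Omega -> R) : measurable_fun setT g ->
    (forall w, `|g w| <= `|F w| + `|psi (X w)|) ->
    mu.-integrable setT (fun w => (g w * \1_B (X w))%:E).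
  move=> mg hg; apply: (int_bound2 (g1 := F) (g2 := fun w => psi (X w))) => //.
  - by apply: measurable_funM => //; exact: mind.
  - move=> w; rewrite normrM (le_trans _ (hg w))// ler_piMr//.
    by rewrite /indic; case: (_ \in _); rewrite ?normr1 ?normr0.
have ia : mu.-integrable setT (fun w => (a w * \1_B (X w))%:E).
  by apply: i1 => // w; rewrite -abs_ab lerDl.
have ib : mu.-integrable setT (fun w => (b w * \1_B (X w))%:E).
  by apply: i1 => // w; rewrite -abs_ab lerDr.
have iF1 := iFB mB.
have iG1 : mu.-integrable setT (fun w => (psi (X w) * \1_B (X w))%:E).
  by apply: i1 => // w; rewrite lerDr.
apply: fin_sub0; [exact: integrable_fin_num ia|exact: integrable_fin_num ib|].
rewrite -integralB_EFin//.
transitivity (\int[mu]_w ((F w * \1_B (X w))%:E - (psi (X w) * \1_B (X w))%:E))%E.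
  by apply: eq_integral => w _; rewrite -!EFinB -!mulrBl ab.
rewrite integralB_EFin// hpsi// subee//.
exact: integrable_fin_num iG1.
Qed.


Let ppn (x : R) : pp x - nn x = x.
Proof. rewrite /pp /nn; lra. Qed.
Let ppa (x : R) : pp x + nn x = `|x|.
Proof. rewrite /pp /nn; lra. Qed.
Let pple (x : R) : pp x <= `|x|.
Proof. by have [h1 h2] := nrm x; rewrite /pp; lra. Qed.
Let nnle (x : R) : nn x <= `|x|.
Proof. by have [h1 h2] := nrm x; rewrite /nn; lra. Qed.
Let nn_pos (x : R) : 0 <= x -> nn x = 0.
Proof. by move=> h; rewrite /nn ger0_norm// subrr mul0r. Qed.
Let pp_neg (x : R) : x < 0 -> pp x = 0.
Proof. by move=> h; rewrite /pp ltr0_norm// subrr mul0r. Qed.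

Ltac pos := move=> *; rewrite ?lee_fin /Gp /Gm; apply: mulr_ge0;
  first [exact: a0|exact: b0|exact: pp0|exact: nn0|exact: normr_ge0|
         rewrite mulr_ge0// /indic; case: (_ \in _)].

Lemma CE (u : T -> R) : measurable_fun setT u ->
  mu.-integrable setT (fun w => (F w * u (X w))%:E) ->
  mu.-integrable setT (fun w => (psi (X w) * u (X w))%:E) /\
  (\int[mu]_w (F w * u (X w))%:E = \int[mu]_w (psi (X w) * u (X w))%:E)%E.
Proof.
move=> mu_ iFu.
have NTab := NT mX ma mb a0 b0 hab.
have mabs : measurable_fun setT (fun x => `|u x|).
  by apply: measurableT_comp => //; exact: normr_measurable.
have mh (B : set T) : measurable B -> measurable_fun setT (fun x => `|u x| * \1_B x).
  by move=> mB; apply: measurable_funM => //; exact: measurable_indic.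
have h0 (B : set T) x : 0 <= `|u x| * \1_B x.
  by rewrite mulr_ge0// /indic; case: (_ \in _).
have mGu : measurable_fun setT (fun w => psi (X w) * u (X w)).
  by apply: measurable_funM => //; exact: measurableT_comp.
have iGu : mu.-integrable setT (fun w => (psi (X w) * u (X w))%:E).
  apply/integrableP; split; first exact/measurable_EFinP.
  have eq1 w : (`|(psi (X w) * u (X w))%:E| =
      (Gp w * `|u (X w)|)%:E + (Gm w * `|u (X w)|)%:E)%E.
    by rewrite abse_EFin -EFinD -mulrDl /Gp /Gm ppa normrM.
  under eq_integral do rewrite eq1.
  have mGp : measurable_fun setT Gp by apply: mpp; exact: measurableT_comp.
  have mGm : measurable_fun setT Gm by apply: mnn; exact: measurableT_comp.
  rewrite ge0_integralD//; last 4 first.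
  - by move=> w _; rewrite lee_fin; exact: mulr_ge0 (pp0 _) (normr_ge0 _).
  - apply/measurable_EFinP; apply: measurable_funM => //; exact: (measurableT_comp mabs mX).
  - by move=> w _; rewrite lee_fin; exact: mulr_ge0 (nn0 _) (normr_ge0 _).
  - apply/measurable_EFinP; apply: measurable_funM => //; exact: (measurableT_comp mabs mX).
  have mFuabs : measurable_fun setT (fun w => `|(F w * u (X w))%:E|%E).
    apply: measurableT_comp => //; apply/measurable_EFinP.
    exact: measurable_funM mF (measurableT_comp mu_ mX).
  have iabs := integrable_lty measurableT (integrable_abse iFu).
  have P1 : (\int[mu]_w (Gp w * `|u (X w)|)%:E <= \int[mu]_w `|(F w * u (X w))%:E|)%E.
    apply: (@le_trans _ _ (\int[mu]_w (b w * (`|u (X w)| * \1_Bp (X w)))%:E)%E).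
      apply: ge0_le_integral => //.
      - by pos.
      - apply/measurable_EFinP; apply: measurable_funM => //; exact: (measurableT_comp mabs mX).
      - apply/measurable_EFinP; apply: measurable_funM => //; exact: (measurableT_comp (mh _ _) mX).
      move=> w _; rewrite lee_fin /indic.
      have [h|h] := boolP (X w \in Bp).
        rewrite mulr1 ler_wpM2r// /b lerDl; exact: nn0.
      rewrite mulr0 mulr0 /Gp pp_neg ?mul0r//.
      by rewrite ltNge; apply: contra h => h; apply/mem_set.
    rewrite -(NTab (fun x => `|u x| * \1_Bp x))//; last exact: mh.
    apply: ge0_le_integral => //.
    - by pos.
    - apply/measurable_EFinP; apply: measurable_funM => //; exact: (measurableT_comp (mh _ _) mX).
    move=> w _; rewrite abse_EFin lee_fin /indic normrM.
    have [h|h] := boolP (X w \in Bp).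
      rewrite mulr1 ler_wpM2r// /a /Gm nn_pos ?addr0//; last exact: (set_mem h).
      exact: pple.
    by rewrite !mulr0 mulr_ge0.
  have P2 : (\int[mu]_w (Gm w * `|u (X w)|)%:E <= \int[mu]_w `|(F w * u (X w))%:E|)%E.
    apply: (@le_trans _ _ (\int[mu]_w (a w * (`|u (X w)| * \1_Bm (X w)))%:E)%E).
      apply: ge0_le_integral => //.
      - by pos.
      - apply/measurable_EFinP; apply: measurable_funM => //; exact: (measurableT_comp mabs mX).
      - apply/measurable_EFinP; apply: measurable_funM => //; exact: (measurableT_comp (mh _ _) mX).
      move=> w _; rewrite lee_fin /indic.
      have [h|h] := boolP (X w \in Bm).
        rewrite mulr1 ler_wpM2r// /a lerDr; exact: pp0.
      rewrite mulr0 mulr0 /Gm nn_pos ?mul0r//.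
      by rewrite leNgt; apply: contra h => h; apply/mem_set.
    rewrite (NTab (fun x => `|u x| * \1_Bm x))//; last exact: mh.
    apply: ge0_le_integral => //.
    - by pos.
    - apply/measurable_EFinP; apply: measurable_funM => //; exact: (measurableT_comp (mh _ _) mX).
    move=> w _; rewrite abse_EFin lee_fin /indic normrM.
    have [h|h] := boolP (X w \in Bm).
      rewrite mulr1 ler_wpM2r// /b /Gp pp_neg ?add0r//; last exact: (set_mem h).
      exact: nnle.
    by rewrite !mulr0 mulr_ge0.
  by apply: lte_add_pinfty; [exact: le_lt_trans P1 iabs|exact: le_lt_trans P2 iabs].
split => //.
pose up x := pp (u x); pose um x := nn (u x).
have mup : measurable_fun setT up.
  apply: measurable_funM; last exact: measurable_cst.
  by apply: measurable_funD => //.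
have mum : measurable_fun setT um.
  apply: measurable_funM; last exact: measurable_cst.
  by apply: measurable_funB => //.
have E1 := NTab up mup (fun x => pp0 _).
have E2 := NTab um mum (fun x => nn0 _).
have mupX : measurable_fun setT (fun w => up (X w)) by exact: measurableT_comp.
have mumX : measurable_fun setT (fun w => um (X w)) by exact: measurableT_comp.
have bnd (c1 c2 : Omega -> R) : (forall w, (c1 w = a w /\ c2 w = b w) \/ (c1 w = b w /\ c2 w = a w)) ->
    measurable_fun setT c1 -> measurable_fun setT c2 ->
    mu.-integrable setT (fun w => (c1 w * up (X w) + c2 w * um (X w))%:E).
  move=> hc mc1 mc2.
  apply: (int_bound2 (g1 := fun w => F w * u (X w)) (g2 := fun w => psi (X w) * u (X w))) => //.
  - by apply: measurable_funD; apply: measurable_funM.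
  - move=> w.
    have h1 := mulr_ge0 (a0 w) (nn0 (u (X w))).
    have h2 := mulr_ge0 (b0 w) (pp0 (u (X w))).
    have h3 := mulr_ge0 (a0 w) (pp0 (u (X w))).
    have h4 := mulr_ge0 (b0 w) (nn0 (u (X w))).
    rewrite -/(up (X w)) -/(um (X w)) in h1 h2 h3 h4.
    have P0 : 0 <= c1 w * up (X w) + c2 w * um (X w).
      by case: (hc w) => -[-> ->]; lra.
    rewrite (ger0_norm P0) !normrM -mulrDl -abs_ab (ger0_norm (a0 w)) (ger0_norm (b0 w)).
    rewrite -ppa -/(up (X w)) -/(um (X w)).
    rewrite mulrDl !mulrDr.
    by case: (hc w) => -[-> ->]; lra.
have iP := bnd a b (fun w => or_introl (conj erefl erefl)) ma mb.
have iN := bnd b a (fun w => or_intror (conj erefl erefl)) mb ma.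
apply: fin_sub0; [exact: integrable_fin_num iFu|exact: integrable_fin_num iGu|].
rewrite -integralB_EFin//.
transitivity (\int[mu]_w ((a w * up (X w) + b w * um (X w))%:E -
                          (b w * up (X w) + a w * um (X w))%:E))%E.
  apply: eq_integral => w _; rewrite -!EFinB; congr EFin.
  rewrite -mulrBl -ab.
  have -> : u (X w) = up (X w) - um (X w) by rewrite /up /um ppn.
  ring.
rewrite integralB_EFin//.
have split (c1 c2 : Omega -> R) : (forall w, 0 <= c1 w) -> (forall w, 0 <= c2 w) ->
    measurable_fun setT c1 -> measurable_fun setT c2 ->
    (\int[mu]_w (c1 w * up (X w) + c2 w * um (X w))%:E =
     \int[mu]_w (c1 w * up (X w))%:E + \int[mu]_w (c2 w * um (X w))%:E)%E.
  move=> c10 c20 mc1 mc2.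
  under eq_integral do rewrite EFinD.
  rewrite ge0_integralD//.
  - by move=> w _; rewrite lee_fin; exact: mulr_ge0 (c10 _) (pp0 _).
  - by apply/measurable_EFinP; exact: measurable_funM.
  - by move=> w _; rewrite lee_fin; exact: mulr_ge0 (c20 _) (nn0 _).
  - by apply/measurable_EFinP; exact: measurable_funM.
rewrite split// split// E1 -E2 subee//.
by rewrite -split//; exact: integrable_fin_num iN.
Qed.

End CE.

Section CEc.
Context (R : realType) (dO dT : measure_display) (Omega : measurableType dO)
  (T : measurableType dT) (mu : {measure set Omega -> \bar R}) (X : Omega -> T)
  (mX : measurable_fun setT X).
Variables (F : Omega -> R) (psi : T -> R) (c : Omega -> R) (mF : measurable_fun setT F)
  (mpsi : measurable_fun setT psi) (mc : measurable_fun setT c) (c0 : forall w, 0 <= c w)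
  (iF : mu.-integrable setT (EFin \o F)).
Hypothesis hpsi : forall B, measurable B ->
  (\int[mu]_w (F w * \1_B (X w))%:E = \int[mu]_w (psi (X w) * c w * \1_B (X w))%:E)%E.

Let mG : measurable_fun setT (fun w => psi (X w) * c w).
Proof. by apply: measurable_funM => //; exact: measurableT_comp. Qed.

Let mind B : measurable B -> measurable_fun setT (fun w => \1_B (X w) : R).
Proof. move=> mB; apply: measurableT_comp => //; exact: measurable_indic. Qed.

Let iFB B : measurable B -> mu.-integrable setT (fun w => (F w * \1_B (X w))%:E).
Proof.
move=> mB; apply: le_integrable iF => //.
  by apply/measurable_EFinP; apply: measurable_funM => //; exact: mind.
move=> w _ /=; rewrite lee_fin normrM.
rewrite ler_piMr// /indic; case: (_ \in _) => /=; by rewrite ?normr1 ?normr0.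
Qed.

Let Bp := [set x | 0 <= psi x].
Let Bm := [set x | psi x < 0].
Let mBp : measurable Bp.
Proof.
have -> : Bp = psi @^-1` `[0, +oo[%classic.
  by apply/seteqP; split => x /=; rewrite in_itv /= andbT.
by rewrite -(setTI (psi @^-1` _)); apply: mpsi => //; exact: measurable_itv.
Qed.
Let mBm : measurable Bm.
Proof.
have -> : Bm = psi @^-1` `]-oo, 0[%classic.
  by apply/seteqP; split => x /=; rewrite in_itv /=.
by rewrite -(setTI (psi @^-1` _)); apply: mpsi => //; exact: measurable_itv.
Qed.

Let Gp_ge0 w : 0 <= psi (X w) * c w * \1_Bp (X w).
Proof.
rewrite /indic; have [h|h] := boolP (X w \in Bp); rewrite ?mulr1 ?mulr0 //.
by move/set_mem: h => h; rewrite mulr_ge0.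
Qed.
Let Gm_le0 w : psi (X w) * c w * \1_Bm (X w) <= 0.
Proof.
rewrite /indic; have [h|h] := boolP (X w \in Bm); rewrite ?mulr1 ?mulr0 //.
move/set_mem: h; rewrite /Bm /= => /ltW h.
by rewrite mulr_le0_ge0.
Qed.

Lemma CE_int_c : mu.-integrable setT (fun w => (psi (X w) * c w)%:E).
Proof.
apply/integrableP; split; first exact/measurable_EFinP.
have eq1 : forall w, `|(psi (X w) * c w)%:E|%E =
    ((psi (X w) * c w * \1_Bp (X w))%:E + (- (psi (X w) * c w * \1_Bm (X w)))%:E)%E.
  move=> w; rewrite abse_EFin /indic.
  have [h|h] := leP 0 (psi (X w)).
    have -> : (X w \in Bp) = true by apply/mem_set.
    have -> : (X w \in Bm) = false.
      by apply/negbTE/negP => /set_mem; rewrite /Bm /= ltNge h.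
    by rewrite ger0_norm ?mulr_ge0// mulr1 mulr0 oppr0 adde0.
  have -> : (X w \in Bp) = false.
    by apply/negbTE/negP => /set_mem; rewrite /Bp /= leNgt h.
  have -> : (X w \in Bm) = true by apply/mem_set.
  rewrite mulr1 mulr0 add0e normrM (ltr0_norm h) (ger0_norm (c0 w)).
  by rewrite mulNr.
under eq_integral do rewrite eq1.
rewrite ge0_integralD//; last 4 first.
- by move=> w _; rewrite lee_fin.
- by apply/measurable_EFinP; apply: measurable_funM => //; exact: mind.
- by move=> w _; rewrite lee_fin oppr_ge0.
- by apply/measurable_EFinP; apply: measurable_funN; apply: measurable_funM => //; exact: mind.
apply: lte_add_pinfty.
  by rewrite -hpsi//; exact: integrable_lty (iFB mBp).
have h2 := @integral_ge0N _ _ _ mu setT (fun w => (- (psi (X w) * c w * \1_Bm (X w)))%:E).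
rewrite -[X in (X < _)%E]oppeK -h2; last by move=> w _; rewrite lee_fin oppr_ge0.
under eq_integral do rewrite -EFinN opprK.
rewrite -hpsi//.
have := integrable_fin_num measurableT (iFB mBm).
by move=> hf; rewrite ltey_eq fin_numN hf.
Qed.
End CEc.
Section mmx.
Context (R : realType) (dT : measure_display) (T : measurableType dT).

Definition mmx a b (M : T -> 'M[R]_(a, b)) :=
  forall i j, measurable_fun setT (fun x => M x i j).

Lemma mmx_mul a b c (M : T -> 'M[R]_(a, b)) (N : T -> 'M[R]_(b, c)) :
  mmx M -> mmx N -> mmx (fun x => M x *m N x).
Proof.
move=> hM hN i j; under eq_fun do rewrite mxE.
by apply: measurable_sum => l; apply: measurable_funM.
Qed.

Lemma mmx_cst a b (M : 'M[R]_(a, b)) : mmx (fun _ => M).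
Proof. by move=> i j; exact: measurable_cst. Qed.

Lemma mmx_tr a b (M : T -> 'M[R]_(a, b)) : mmx M -> mmx (fun x => (M x)^T).
Proof. by move=> hM i j; under eq_fun do rewrite mxE; exact: hM. Qed.

Lemma mdet n (M : T -> 'M[R]_n) : mmx M -> measurable_fun setT (fun x => \det (M x)).
Proof.
move=> hM; rewrite /determinant.
apply: measurable_sum => s; apply: measurable_funM; first exact: measurable_cst.
by apply: measurable_prod => i _; exact: hM.
Qed.

Lemma meas_inv : measurable_fun setT (@GRing.inv R).
Proof.
have -> : [set: R] = [set x | x != 0] `|` [set 0].
  by apply/seteqP; split => x //= _; case: (eqVneq x 0) => ?; [right|left].
apply/measurable_funU => //.
- exact: measurable_realfun.open_measurable (@open_neq R 0).
split.
  apply: measurable_realfun.open_continuous_measurable_fun; first exact: open_neq.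
  by move=> x; rewrite inE => /inv_continuous.
exact: measurable_fun_set1.
Qed.

Lemma mmx_inv n (M : T -> 'M[R]_n) : mmx M -> (forall x, M x \in unitmx) ->
  mmx (fun x => invmx (M x)).
Proof.
move=> hM hU i j.
have -> : (fun x => invmx (M x) i j) =
  (fun x => (\det (M x))^-1 * ((-1) ^+ (j + i) * \det (row' j (col' i (M x))))).
  apply/funext => x; rewrite /invmx hU !mxE /cofactor //.
apply: measurable_funM.
  by apply: measurableT_comp; [exact: meas_inv | exact: mdet].
apply: measurable_funM; first exact: measurable_cst.
by apply: mdet => a b; under eq_fun do rewrite !mxE; exact: hM.
Qed.

End mmx.
Lemma onehotE (R : realType) d m (K : 'M[R]_(d, m)) a b :
  (onehot a *m K *m (onehot b)^T) 0 0 = K a b.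
Proof.
rewrite !mxE (bigD1 b) //= big1 => [|j /negbTE hj]; last by rewrite !mxE hj mulr0.
rewrite addr0 !mxE eqxx mulr1 (bigD1 a) //= big1 => [|j /negbTE hj]; last by rewrite !mxE hj mul0r.
by rewrite addr0 !mxE eqxx mul1r.
Qed.

Lemma unitM (R : realType) d q (D : 'M[R]_(d, q.+1)) (W : 'M[R]_d) :
  \rank D = q.+1 -> sym_posdef W -> D^T *m W *m D \in unitmx.
Proof.
move=> rD [_ pW]; rewrite unitmxE unitfE; apply/negP => /det0P [v vn0 hv].
have rf : row_free D^T by rewrite /row_free mxrank_tr rD.
have h0 : (v *m D^T) != 0 by rewrite mulmx_free_eq0.
have := pW _ h0.
have -> : v *m D^T *m W *m (v *m D^T)^T = (v *m (D^T *m W *m D)) *m v^T.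
  by rewrite trmx_mul trmxK !mulmxA.
by rewrite hv mul0mx mxE ltxx.
Qed.

Lemma Kalg (R : realType) d m q (D : 'M[R]_(d, q.+1)) (Db : 'M[R]_(m, q.+1))
  (W : 'M[R]_d) (beta : 'cV[R]_q.+1) j :
  \rank D = q.+1 -> sym_posdef W ->
  \sum_k (D *m beta) k 0 * Kmat D Db W k j = (Db *m beta) j 0.
Proof.
move=> rD pW.
have -> : \sum_k (D *m beta) k 0 * Kmat D Db W k j = ((D *m beta)^T *m Kmat D Db W) 0 j.
  by rewrite [RHS]mxE; apply: eq_bigr => k _; rewrite [in RHS]mxE.
rewrite /Kmat.
have -> : (D *m beta)^T *m (W *m D *m invmx (D^T *m W *m D) *m Db^T) =
    beta^T *m ((D^T *m W *m D) *m invmx (D^T *m W *m D)) *m Db^T.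
  by rewrite trmx_mul !mulmxA.
rewrite mulmxV ?unitM// mulmx1.
by rewrite mxE [RHS]mxE; apply: eq_bigr => l _; rewrite !mxE mulrC.
Qed.

Lemma fvec_design (R : realType) q r (f : 'I_q -> R -> R) (act : 'I_r -> R) k
  (beta : 'cV[R]_q.+1) :
  (fvec f (act k) *m beta) 0 0 = (design f act *m beta) k 0.
Proof. by rewrite !mxE; apply: eq_bigr => l _; rewrite !mxE. Qed.

Lemma int_restr d (T : measurableType d) (R : realType) (mu : {measure set T -> \bar R})
  (E : set T) (f : T -> R) : measurable E ->
  (\int[mu]_(w in E) (f w)%:E = \int[mu]_w (f w * \1_E w)%:E)%E.
Proof.
move=> mE; rewrite integral_mkcond; apply: eq_integral => w _.
by rewrite patchE /indic; case: ifP => _; rewrite ?mulr1 ?mulr0.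
Qed.

Lemma indic_pre (T1 T2 : Type) (R : pzRingType) (X : T1 -> T2) (B : set T2) w :
  \1_(X @^-1` B) w = \1_B (X w) :> R.
Proof.
rewrite /indic; congr (_%:R); apply/idP/idP => /set_mem h; exact/mem_set.
Qed.

Lemma msel d (T : measurableType d) (R : realType) m (pb : T -> 'I_m)
  (h : 'I_m -> T -> R) : (forall j, measurable (pb @^-1` [set j])) ->
  (forall j, measurable_fun setT (h j)) -> measurable_fun setT (fun x => h (pb x) x).
Proof.
move=> mpb mh.
rewrite (_ : (fun x => h (pb x) x) =
  fun x => \sum_j \1_(pb @^-1` [set j]) x * h j x); last first.
  apply/funext => x; rewrite (bigD1 (pb x))//= big1 => [|j hj].
    by rewrite addr0 /indic mem_set// mul1r.
  rewrite /indic memNset ?mul0r//= => hj'; by rewrite hj' eqxx in hj.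
by apply: measurable_sum => j; apply: measurable_funM => //.

Qed.

Unset Implicit Arguments. Set Strict Implicit.

Theorem proposition2
  (R : realType) (dO : measure_display) (Omega : measurableType dO)
  (P : probability Omega R)
  (p n d m q : nat)
  (Xset : set (p.-tuple R))
  (act : 'I_d -> R) (actbar : 'I_m -> R)
  (X0 : Omega -> p.-tuple R)
  (X : 'I_n -> Omega -> p.-tuple R) (A : 'I_n -> Omega -> 'I_d)
  (Rw : 'I_n -> Omega -> R)
  (pit : 'I_n -> 'I_d -> p.-tuple R -> R)
  (rho : p.-tuple R -> R -> R)
  (f : 'I_q -> R -> R)
  (W : 'I_n -> p.-tuple R -> 'M[R]_d)
  (pibar : p.-tuple R -> 'I_m) :
  (0 < n)%N ->
  injective act -> injective actbar ->
  (* random elements and their measurability *)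
  measurable_fun setT X0 -> (forall w, Xset (X0 w)) ->
  (forall i, measurable_fun setT (X i)) ->
  (forall i w, Xset (X i w)) ->
  (forall i k, measurable (A i @^-1` [set k])) ->
  (forall i, measurable_fun setT (Rw i)) ->
  (* (i) independence of the tuples *)
  tuples_independent P X A Rw ->
  (* (ii) X_1, ..., X_n identically distributed as X *)
  (forall i (B : set (p.-tuple R)), measurable B ->
     P (X i @^-1` B) = P (X0 @^-1` B)) ->
  (* (iii) A_i | X_i ~ pit_i(. | X_i), with pit_i > 0 *)
  (forall i k, measurable_fun setT (pit i k)) ->
  (forall i k x, Xset x -> 0 < pit i k x) ->
  (forall i x, Xset x -> \sum_(k < d) pit i k x = 1) ->
  (forall i k (B : set (p.-tuple R)), measurable B ->
     (P (X i @^-1` B `&` A i @^-1` [set k]) =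
     \int[P]_(w in X i @^-1` B) (pit i k (X i w))%:E)%E) ->
  (* (iv) rho(x, a) = E[R_i | X_i = x, A_i = a], the same for every i *)
  (forall k, measurable_fun setT (fun x => rho x (act k))) ->
  (forall j, measurable_fun setT (fun x => rho x (actbar j))) ->
  (forall i, P.-integrable setT (fun w => (Rw i w)%:E)) ->
  (forall i k (B : set (p.-tuple R)), measurable B ->
     (\int[P]_(w in X i @^-1` B `&` A i @^-1` [set k]) (Rw i w)%:E =
     \int[P]_(w in X i @^-1` B `&` A i @^-1` [set k]) (rho (X i w) (act k))%:E)%E) ->
  (* design matrix D has full column rank q+1 *)
  \rank (design f act) = q.+1 ->
  (* regression assumption *)
  (forall x, Xset x -> exists beta : 'cV[R]_(q.+1),
     (forall k, rho x (act k) = (fvec f (act k) *m beta) 0 0) /\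
     (forall j, rho x (actbar j) = (fvec f (actbar j) *m beta) 0 0)) ->
  (* weight matrices *)
  (forall i x, sym_posdef (W i x)) ->
  (forall i k l, measurable_fun setT (fun x => W i x k l)) ->
  (* deterministic new policy *)
  (forall j, measurable (pibar @^-1` [set j])) ->
  (* finiteness of the expectations involved *)
  (forall i, P.-integrable setT (fun w =>
     (Rw i w * (onehot (A i w) *m
        Kmat (design f act) (design f actbar) (W i (X i w)) *m
        (onehot (pibar (X i w)))^T) 0 0 / pit i (A i w) (X i w))%:E)) ->
  P.-integrable setT (fun w => (rho (X0 w) (actbar (pibar (X0 w))))%:E) ->
  (* conclusion: E[V_K(pibar)] = V(pibar) *)
  (\int[P]_w
     ((n%:R)^-1 * \sum_(i < n)
        Rw i w * (onehot (A i w) *m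
          Kmat (design f act) (design f actbar) (W i (X i w)) *m
          (onehot (pibar (X i w)))^T) 0 0 / pit i (A i w) (X i w))%:E
  = \int[P]_w (rho (X0 w) (actbar (pibar (X0 w))))%:E)%E.
Proof.
move=> n0 iact iactb mX0 X0s mX Xs mA mRw indep idd mpit pit0 pitsum hiii
  mrho mrhob iR hiv rD reg Wpd mW mpib iT iV.
set Dm := design f act.
set Dbm := design f actbar.
have key : forall i : 'I_n,
  (\int[P]_w (Rw i w * (onehot (A i w) *m Kmat Dm Dbm (W i (X i w)) *m
     (onehot (pibar (X i w)))^T) 0 0 / pit i (A i w) (X i w))%:E =
   \int[P]_w (rho (X0 w) (actbar (pibar (X0 w))))%:E)%E.
  move=> i.
  pose Kx x := Kmat Dm Dbm (W i x).
  have mKx : mmx Kx.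
    rewrite /Kx /Kmat; apply: mmx_mul; last exact: mmx_cst.
    apply: mmx_mul; first by apply: mmx_mul; [exact: mW|exact: mmx_cst].
    apply: mmx_inv; first by apply: mmx_mul; [apply: mmx_mul; [exact: mmx_cst|exact: mW]|exact: mmx_cst].
    by move=> x; apply: unitM.
  pose g k x := Kx x k (pibar x) / pit i k x.
  have mg k : measurable_fun setT (g k).
    apply: measurable_funM; last by apply: measurableT_comp; [exact: meas_inv|exact: mpit].
    by apply: (msel (h := fun j x => Kx x k j)) => // j; exact: mKx.
  have mXi := mX i.
  have Tsum w : Rw i w * (onehot (A i w) *m Kmat Dm Dbm (W i (X i w)) *m
     (onehot (pibar (X i w)))^T) 0 0 / pit i (A i w) (X i w) =
     \sum_k (Rw i w * \1_(A i @^-1` [set k]) w) * g k (X i w).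
    rewrite onehotE (bigD1 (A i w))//= big1 => [|k hk].
      by rewrite addr0 /indic mem_set// mulr1 /g /Kx mulrA.
    rewrite /indic memNset ?mulr0 ?mul0r//= => hk'; by rewrite hk' eqxx in hk.
  have Tg w : Rw i w * (onehot (A i w) *m Kmat Dm Dbm (W i (X i w)) *m
     (onehot (pibar (X i w)))^T) 0 0 / pit i (A i w) (X i w) =
     Rw i w * g (A i w) (X i w).
    by rewrite onehotE /g /Kx mulrA.
  have mpre B : measurable B -> measurable (X i @^-1` B).
    by move=> mB; rewrite -(setTI (X i @^-1` B)); exact: mXi.
  have ind01 (Z : Type) (E : set Z) z : 0 <= \1_E z :> R /\ `|\1_E z| <= 1 :> R.
    by rewrite /indic; case: (_ \in _); rewrite ?normr1 ?normr0.
  have Ek k : [/\ P.-integrable setT (fun w => ((Rw i w * \1_(A i @^-1` [set k]) w) * g k (X i w))%:E),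
    P.-integrable setT (fun w => (pit i k (X i w) * rho (X i w) (act k) * g k (X i w))%:E) &
    (\int[P]_w ((Rw i w * \1_(A i @^-1` [set k]) w) * g k (X i w))%:E =
     \int[P]_w (pit i k (X i w) * rho (X i w) (act k) * g k (X i w))%:E)%E].
    set S := A i @^-1` [set k].
    have mS : measurable S := mA i k.
    have mIS : measurable_fun setT (\1_S : Omega -> R) by exact: measurable_indic.
    have mrk := mrho k.
    have mF : measurable_fun setT (fun w => Rw i w * \1_S w) by exact: measurable_funM.
    have iF : P.-integrable setT (EFin \o (fun w => Rw i w * \1_S w)).
      apply: le_integrable (iR i) => //; first exact/measurable_EFinP.
      move=> w _ /=; rewrite lee_fin normrM ler_piMr//; exact: (ind01 _ S w).2.
    have Hiv B : measurable B -> (\int[P]_w ((Rw i w * \1_S w) * \1_B (X i w))%:E =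
        \int[P]_w (rho (X i w) (act k) * \1_S w * \1_B (X i w))%:E)%E.
      move=> mB; have := hiv i k B mB.
      have mE := measurableI _ _ (mpre B mB) mS.
      rewrite !(int_restr _ _ mE) => h; transitivity (\int[P]_w (Rw i w * \1_(X i @^-1` B `&` S) w)%:E)%E.
        by apply: eq_integral => w _; rewrite indicI /= indic_pre; congr EFin; ring.
      rewrite h; apply: eq_integral => w _; rewrite indicI /= indic_pre; congr EFin; ring.
    have irS : P.-integrable setT (fun w => (rho (X i w) (act k) * \1_S w)%:E).
      by apply: (CE_int_c mXi mF mrk mIS _ iF Hiv) => w; exact: (ind01 _ S w).1.
    have Hiii B : measurable B -> (\int[P]_w (\1_S w * \1_B (X i w))%:E =
        \int[P]_w (pit i k (X i w) * \1_B (X i w))%:E)%E.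
      move=> mB; have := hiii i k B mB; rewrite (int_restr _ _ (mpre B mB)) => h.
      transitivity (P (X i @^-1` B `&` S)).
        rewrite -(setIT (X i @^-1` B `&` S)) -integral_indic//; last exact: measurableI (mpre B mB) mS.
        by apply: eq_integral => w _; rewrite indicI /= indic_pre; congr EFin; ring.
      by move: h; rewrite -/S => ->; apply: eq_integral => w _; rewrite indic_pre.
    have iS : P.-integrable setT (EFin \o (\1_S : Omega -> R)) := integrable_indic P mS.
    have Hb B : measurable B -> (\int[P]_w ((Rw i w * \1_S w) * \1_B (X i w))%:E =
        \int[P]_w ((fun x => pit i k x * rho x (act k)) (X i w) * \1_B (X i w))%:E)%E.
      move=> mB; rewrite Hiv//.
      have mu' : measurable_fun setT (fun x => rho x (act k) * \1_B x).
        by apply: measurable_funM => //; exact: measurable_indic.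
      have iFu : P.-integrable setT (fun w => (\1_S w * (fun x => rho x (act k) * \1_B x) (X i w))%:E).
        apply: le_integrable irS => //.
          apply/measurable_EFinP; apply: measurable_funM => //; exact: (measurableT_comp mu' mXi).
        move=> w _ /=; rewrite lee_fin.
        have -> : \1_S w * (rho (X i w) (act k) * \1_B (X i w)) =
          (rho (X i w) (act k) * \1_S w) * \1_B (X i w) by ring.
        by rewrite normrM ler_piMr//; exact: (ind01 _ B (X i w)).2.
      have [_ h] := CE mXi mIS (mpit i k) iS Hiii mu' iFu.
      transitivity (\int[P]_w (\1_S w * (fun x => rho x (act k) * \1_B x) (X i w))%:E)%E.
        by apply: eq_integral => w _ /=; congr EFin; ring.
      by rewrite h; apply: eq_integral => w _ /=; congr EFin; ring.
    have mpsi : measurable_fun setT (fun x => pit i k x * rho x (act k)).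
      exact: measurable_funM.
    have iFg : P.-integrable setT (fun w => ((Rw i w * \1_S w) * g k (X i w))%:E).
      apply: le_integrable (iT i) => //.
        apply/measurable_EFinP; apply: measurable_funM => //; exact: (measurableT_comp (mg k) mXi).
      move=> w _ /=; rewrite lee_fin Tg /indic.
      have [h|h] := boolP (w \in S).
        by move/set_mem: h => /= ->; rewrite mulr1.
      by rewrite mulr0 mul0r normr0.
    have [iEk Ek] := CE mXi mF mpsi iF Hb (mg k) iFg.
    by split.
  have E1 k : P.-integrable setT (fun w => ((Rw i w * \1_(A i @^-1` [set k]) w) * g k (X i w))%:E).
    by case: (Ek k).
  have E2 k : P.-integrable setT (fun w => (pit i k (X i w) * rho (X i w) (act k) * g k (X i w))%:E).
    by case: (Ek k).
  have E3 k : (\int[P]_w ((Rw i w * \1_(A i @^-1` [set k]) w) * g k (X i w))%:E =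
     \int[P]_w (pit i k (X i w) * rho (X i w) (act k) * g k (X i w))%:E)%E.
    by case: (Ek k).
  under eq_integral do rewrite Tsum -sumEFin.
  rewrite integral_sum//.
  under eq_bigr do rewrite E3.
  rewrite -integral_sum//.
  have phiE w : \sum_k pit i k (X i w) * rho (X i w) (act k) * g k (X i w) =
      rho (X i w) (actbar (pibar (X i w))).
    have [beta [hb1 hb2]] := reg _ (Xs i w).
    rewrite hb2 fvec_design -(Kalg _ _ _ rD (Wpd i (X i w))).
    apply: eq_bigr => k _; rewrite hb1 fvec_design /g /Kx.
    have pn : pit i k (X i w) != 0 by rewrite gt_eqF// pit0.
    by field.
  under eq_integral do rewrite sumEFin phiE.
  have mphi : measurable_fun setT (fun x => rho x (actbar (pibar x))).
    by apply: (msel (h := fun j x => rho x (actbar j))).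
  have iphi : P.-integrable setT (fun w => (rho (X i w) (actbar (pibar (X i w))))%:E).
    apply: (eq_integrable measurableT (fun w => (\sum_(k < d) (pit i k (X i w) * rho (X i w) (act k) * g k (X i w))%:E)%E)).
      by move=> w _; rewrite sumEFin phiE.
    by apply: (integrable_sum measurableT) => k _; exact: E2.
  have mphiE : measurable_fun setT (fun x => (rho x (actbar (pibar x)))%:E).
    exact/measurable_EFinP.
  transitivity (\int[pushforward P (X i)]_y (rho y (actbar (pibar y)))%:E)%E.
    by rewrite integral_pushforward//.
  transitivity (\int[pushforward P X0]_y (rho y (actbar (pibar y)))%:E)%E.
    apply: eq_measure_integral => B mB _; exact: (idd i B mB).
  by rewrite integral_pushforward//.
under eq_integral do rewrite EFinM -sumEFin.
rewrite integralZl//; last by apply: (integrable_sum measurableT) => i _; exact: iT.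
rewrite integral_sum//.
under eq_bigr do rewrite key.
have := integrable_fin_num measurableT iV; set V := (\int[P]_w _)%E => /fineK <-.
rewrite sumEFin sumr_const card_ord -EFinM -[fine V *+ n]mulr_natl mulrA mulVf ?mul1r//.
by rewrite pnatr_eq0 -lt0n.
Qed.
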